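(* Let $k\ge1$ and $n\ge 2k+1$. If the Kneser graph $K(n,k)$ admits a Hamilton cycle, then the bipartite Kneser graph $H(n,k)$ admits a Hamilton cycle or a Hamilton path.
   Context: $K(n,k)$ has as vertices all $k$-element subsets of $[n]$, two sets adjacent iff disjoint. The bipartite Kneser graph $H(n,k)$ has as vertices all $k$-element and all $(n-k)$-element subsets of $[n]$, with an edge between $A$ and $B$ if and only if $A\subseteq B$. *)

(* Defs.v *)
From mathcomp Require Import all_boot.
Set Implicit Arguments. Unset Strict Implicit. Unset Printing Implicit Defensive.

(* A graph is given by a vertex set V : {set T} over a finType T and an
   adjacency relation e : rel T (only its restriction to V matters). *)

Definition ham_path (T : finType) (V : {set T}) (e : rel T) : Prop :=
  exists (x : T) (p : seq T),
    [/\ uniq (x :: p), V =i (x :: p) & path e x p].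

Definition ham_cycle (T : finType) (V : {set T}) (e : rel T) : Prop :=
  exists (x : T) (p : seq T),
    [/\ uniq (x :: p), V =i (x :: p), 2 < size (x :: p)
      & path e x (rcons p x)].

Definition kneser_V (n k : nat) : {set {set 'I_n}} := [set A : {set 'I_n} | #|A| == k].
Definition kneser_E (n : nat) : rel {set 'I_n} := fun A B => [disjoint A & B].

Definition bkneser_V (n k : nat) : {set {set 'I_n}} :=
  [set A : {set 'I_n} | (#|A| == k) || (#|A| == n - k)].
Definition bkneser_E (n k : nat) : rel {set 'I_n} := fun A B =>
  [|| [&& #|A| == k, #|B| == n - k & A \subset B]
    | [&& #|B| == k, #|A| == n - k & B \subset A]].

(* Main.v *)
Require Import Defs.
From mathcomp Require Import all_boot zify.
Set Implicit Arguments. Unset Strict Implicit. Unset Printing Implicit Defensive.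

Lemma path_map_iota (T : Type) (e : rel T) (f : nat -> T) a m :
  (forall i, a <= i -> i < a + m -> e (f i) (f i.+1)) ->
  path e (f a) (map f (iota a.+1 m)).
Proof.
elim: m a => [|m IH] a H //=.
rewrite H ?leqnn ?addnS ?ltnS ?leq_addr //.
apply: IH => i hi him; apply: H; lia.
Qed.

Lemma cover_count (T : finType) (V : {set T}) (s : seq T) :
  uniq s -> {subset s <= V} -> size s = #|V| -> V =i s.
Proof.
move=> us sV sz.
have /subset_cardP h : #|s| = #|V| by rewrite (card_uniqP us).
have := h (introT subsetP sV) => e y; by rewrite e.
Qed.

Lemma finish_gen (T : finType) (V : {set T}) (f : nat -> T) m :
  0 < m -> (forall i, i < m -> f i \in V) ->
  (forall i j, i < m -> j < m -> f i = f j -> i = j) -> #|V| = m ->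
  let p := map f (iota 1 m.-1) in
  [/\ uniq (f 0 :: p) & V =i (f 0 :: p)].
Proof.
move=> m0 fV finj cV p.
have e : f 0 :: p = map f (iota 0 m) by rewrite /p; case: m m0 {fV finj cV p}.
have u : uniq (f 0 :: p).
  rewrite e map_inj_in_uniq ?iota_uniq // => i j.
  rewrite !mem_iota !add0n => hi hj; exact: finj.
split => //; apply: cover_count => //.
  by move=> y; rewrite e => /mapP[i]; rewrite mem_iota add0n => /fV hi ->.
by rewrite e size_map size_iota.
Qed.

Lemma finish_path (T : finType) (V : {set T}) (e : rel T) (f : nat -> T) m :
  0 < m -> (forall i, i < m -> f i \in V) ->
  (forall i j, i < m -> j < m -> f i = f j -> i = j) -> #|V| = m ->
  (forall i, i.+1 < m -> e (f i) (f i.+1)) -> ham_path V e.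
Proof.
move=> m0 fV finj cV fe.
have [u c] := finish_gen m0 fV finj cV.
exists (f 0), (map f (iota 1 m.-1)); split => //.
apply: path_map_iota => i _; rewrite add0n => h; apply: fe; lia.
Qed.

Lemma finish_cycle (T : finType) (V : {set T}) (e : rel T) (f : nat -> T) m :
  2 < m -> (forall i, i < m -> f i \in V) ->
  (forall i j, i < m -> j < m -> f i = f j -> i = j) -> #|V| = m ->
  (forall i, i < m -> e (f i) (f i.+1)) -> f m = f 0 -> ham_cycle V e.
Proof.
move=> m2 fV finj cV fe fm.
have m0 : 0 < m by lia.
have [u c] := finish_gen m0 fV finj cV.
exists (f 0), (map f (iota 1 m.-1)); split => //.
  by rewrite /= size_map size_iota; lia.
rewrite -fm -map_rcons -cats1.
have -> : [:: m] = iota (1 + m.-1) 1 by rewrite add1n prednK.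
rewrite -iotaD addn1 prednK //.
rewrite {1}fm.
by apply: (@path_map_iota _ e f 0 m) => i _; rewrite add0n => h; apply: fe.
Qed.
Definition ivl n k M (hM : 0 < M) (hn : M <= n) (j : nat) : {set 'I_n} :=
  [set (Ordinal (leq_trans (ltn_pmod (j + val i) hM) hn)) | i : 'I_k].

Lemma card_ivl n k M hM hn j : k < M -> #|@ivl n k M hM hn j| = k.
Proof.
move=> kM; rewrite card_imset ?card_ord // => i i' /(congr1 val) /= /eqP.
rewrite eqn_modDl !modn_small; last 2 first.
  exact: ltn_trans (ltn_ord _) kM. exact: ltn_trans (ltn_ord _) kM.
by move/eqP => h; apply: val_inj.
Qed.

Lemma disj_ivl n k M hM hn j : 2 * k < M ->
  [disjoint @ivl n k M hM hn j & @ivl n k M hM hn (j + k)].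
Proof.
move=> kM; rewrite disjoint_subset; apply/subsetP => x /imsetP[i _ ->].
rewrite inE; apply/imsetP => -[i' _ /(congr1 val) /= h].
move/esym/eqP: h; rewrite eqn_mod_dvd; last by have := ltn_ord i; lia.
rewrite gtnNdvd //; have := ltn_ord i; have := ltn_ord i'; lia.
Qed.

Lemma ivl_mod n k M hM hn j j' : j %% M = j' %% M ->
  @ivl n k M hM hn j = @ivl n k M hM hn j'.
Proof.
move=> h; apply: eq_imset => i; apply: val_inj => /=.
by rewrite -modnDml h modnDml.
Qed.

Lemma kneser_nonbip n k (s : seq {set 'I_n}) : 1 <= k -> 2 * k + 1 <= n ->
  uniq s -> kneser_V n k =i s ->
  [exists a : 'I_(size s), exists b : 'I_(size s),
     [disjoint nth set0 s a & nth set0 s b] && (odd a == odd b)].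
Proof.
move=> k1 hn us Vs; apply: contraT => H.
have nopair a b (ha : a < size s) (hb : b < size s) :
    [disjoint nth set0 s a & nth set0 s b] -> odd a != odd b.
  move=> d; apply/negP => e; apply: (negP H); apply/existsP.
  exists (Ordinal ha); apply/existsP; exists (Ordinal hb); by rewrite d /= e.
have hM : 0 < 2 * k + 1 by rewrite addn1.
pose T t := @ivl n k _ hM hn (t * k).
have Ts t : T t \in s.
  by rewrite -Vs inE card_ivl //; lia.
pose col t := odd (index (T t) s).
have colS t : col t.+1 = ~~ col t.
  have ha : index (T t) s < size s by rewrite index_mem.
  have hb : index (T t.+1) s < size s by rewrite index_mem.
  have := nopair _ _ ha hb; rewrite !nth_index //.
  have d : [disjoint T t & T t.+1].
    rewrite /T (_ : t.+1 * k = t * k + k); first by apply: disj_ivl; lia.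
    by rewrite mulSn addnC.
  move/(_ d); rewrite /col; by case: (odd _); case: (odd _).
have colt t : col t = col 0 (+) odd t.
  elim: t => [|t IH]; first by rewrite addbF.
  by rewrite colS IH /= addbN.
have := colt (2 * k + 1).
have -> : col (2 * k + 1) = col 0.
  by rewrite /col /T (@ivl_mod _ _ _ _ _ _ (0 * k)) // mul0n mod0n modnMr.
rewrite addn1 /= mul2n odd_double /=.
by case: (col 0).
Qed.

Theorem mainTheorem4 (n k : nat) :
  1 <= k -> 2 * k + 1 <= n ->
  ham_cycle (@kneser_V n k) (@kneser_E n) ->
  ham_cycle (@bkneser_V n k) (@bkneser_E n k) \/ ham_path (@bkneser_V n k) (@bkneser_E n k).
Proof.
move=> k1 hn [x [p [us Vs sz pth]]].
pose s := x :: p.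
pose N := size s.
have N0 : 0 < N by [].
have N3 : 2 < N := sz.
pose S j := nth set0 s (j %% N).
have cardSk j : #|S j| = k.
  have : S j \in s by apply: mem_nth; apply: ltn_pmod.
  by rewrite -Vs inE => /eqP.
have cardC (A : {set 'I_n}) : #|~: A| = n - #|A|.
  by have := cardsC A; rewrite card_ord; lia.
have kneq : (k == n - k) = false by apply/eqP; lia.
have disjS j : [disjoint S j & S j.+1].
  move/(pathP set0): pth => h.
  have hi : j %% N < N := ltn_pmod _ N0.
  rewrite /S.
  have -> : j.+1 %% N = (j %% N).+1 %% N by rewrite -addn1 -modnDml addn1.
  move: (j %% N) hi => i hi.
  have := h i; rewrite size_rcons => /(_ hi).
  rewrite -rcons_cons nth_rcons hi nth_rcons /kneser_E.
  case: (ltnP i (size p)) => hip.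
    by rewrite modn_small.
  have ei : i = size p by have hi' : i < (size p).+1 := hi; lia.
  by rewrite ei eqxx (_ : (size p).+1 = N) // modnn.
pose G j (b : bool) := if b then ~: S j else S j.
have edgeG j b : @bkneser_E n k (G j b) (G j.+1 (~~ b)).
  rewrite /G /bkneser_E; case: b => /=; apply/orP.
    right; rewrite cardSk cardC cardSk !eqxx /= subsets_disjoint setCK.
    by rewrite disjoint_sym.
  left; rewrite cardSk cardC cardSk !eqxx /= subsets_disjoint setCK.
  by [].
have cardG j b : #|G j b| = if b then n - k else k.
  by rewrite /G; case: b; rewrite ?cardC cardSk.
have GV j b : G j b \in bkneser_V n k.
  by rewrite inE cardG; case: b; rewrite eqxx ?orbT.
have Ginj i j b c : G i b = G j c -> b = c /\ i %% N = j %% N.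
  move=> e.
  have bc : b = c.
    have := cardG j c; rewrite -e cardG.
    by case: b c {e} => -[] // /eqP; rewrite ?kneq // eq_sym kneq.
  subst c; split => //.
  have eS : S i = S j by move: e; rewrite /G; case: b => // /setC_inj.
  apply/eqP; move/eqP: eS; rewrite /S nth_uniq //; exact: ltn_pmod.
have NC : N = 'C(n, k).
  by rewrite /N -(card_uniqP us) -(eq_card Vs) /kneser_V card_draws card_ord.
have cardBV : #|bkneser_V n k| = 2 * N.
  have -> : bkneser_V n k =
     [set A : {set 'I_n} | #|A| == k] :|: [set A : {set 'I_n} | #|A| == n - k].
    by apply/setP => A; rewrite !inE.
  rewrite cardsU.
  have -> : [set A : {set 'I_n} | #|A| == k] :&: [set A : {set 'I_n} | #|A| == n - k] = set0.
    apply/setP => A; rewrite !inE; apply/negP => /andP[/eqP h1 /eqP h2]; lia.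
  rewrite cards0 subn0 !card_draws card_ord bin_sub; last by lia.
  by rewrite NC; lia.
have [oddN|evenN] := boolP (odd N).
  left; pose f i := G i (odd i).
  apply: (@finish_cycle _ _ _ f (2 * N)).
  - by lia.
  - by move=> i _; apply: GV.
  - move=> i j hi hj /Ginj [eo em].
    have : i == j %[mod N * 2].
      by rewrite chinese_remainder ?coprimen2 // em eqxx !modn2 eo eqxx.
    by rewrite !modn_small ?(mulnC N) // => /eqP.
  - by rewrite cardBV.
  - by move=> i _; rewrite /f oddS; apply: edgeG.
  - rewrite /f /G oddM /= /S; congr nth.
    by rewrite modnMl mod0n.
right.
have := kneser_nonbip k1 hn us Vs.
move=> /existsP[[a ha] /existsP[[b hb] /andP[dab /eqP oab]]].
simpl in dab, oab.
pose f i := G (if i < N then a.+1 + i else b + i) (~~ odd i).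
apply: (@finish_path _ _ _ f (2 * N)).
- by lia.
- by move=> i _; apply: GV.
- move=> i j hi hj /Ginj [eo em].
  have eoij : odd i = odd j by case: (odd i) (odd j) eo => -[].
  have m2 u v : u %% N = v %% N -> odd u = odd v.
    move=> h; have d2 : 2 %| N by rewrite dvdn2.
    have : (u %% N) %% 2 = (v %% N) %% 2 by rewrite h.
    rewrite !(@modn_dvdm N _ 2) // !modn2.
    by case: (odd u); case: (odd v).
  move: em; case: (ltnP i N) => hiN; case: (ltnP j N) => hjN => em.
  + move/eqP: em; rewrite eqn_modDl !modn_small //; by move/eqP.
  + have := m2 _ _ em; rewrite !oddD /= oab eoij.
    by case: (odd b); case: (odd i); case: (odd j).
  + have := m2 _ _ em; rewrite !oddD /= oab eoij.
    by case: (odd b); case: (odd i); case: (odd j).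
  + move/eqP: em; rewrite eqn_modDl.
    have -> : i = (i - N) + N by lia.
    have -> : j = (j - N) + N by lia.
    rewrite !modnDr !modn_small; lia.
- by rewrite cardBV.
- move=> i hi; rewrite /f.
  case: (ltngtP i.+1 N) => hiN.
  + by rewrite addnS oddS; apply: edgeG.
  + by rewrite addnS oddS; apply: edgeG.
  + have oi : odd i by move: evenN; rewrite -hiN /=; case: (odd i).
    rewrite oddS oi /G /=.
    have eSa : S (a.+1 + i) = nth set0 s a.
      by rewrite /S addSnnS hiN modnDr modn_small.
    have eSb : S (b + i.+1) = nth set0 s b.
      by rewrite /S addnC hiN modnDl modn_small.
    rewrite eSa eSb /bkneser_E; apply/orP; left.
    have ca : #|nth set0 s a| = k by have := cardSk a; rewrite /S modn_small.
    have cb : #|nth set0 s b| = k by have := cardSk b; rewrite /S modn_small.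
    by rewrite ca cardC cb !eqxx /= subsets_disjoint setCK.
Qed.
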